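(* Let $(Y, S, A, \mathbf{X}^{P}, \mathbf{X}^{S})$ be jointly distributed random variables describing a unit drawn from an infinite population, where $Y$ is a real-valued outcome with $\mathbb{E}|Y|<\infty$, $S \in \{0,1\}$ is the survey inclusion indicator, $A \in \{1,\ldots,J\}$ is the area indicator, $\mathbf{X}^{P}$ (taking values in $\mathcal{X}^{P}$) are population covariates and $\mathbf{X}^{S}$ (taking values in $\mathcal{X}^{S}$) are survey-only covariates. Fix $j$ with $\Pr(A=j)>0$ and assume: (Sampling ignorability) $Y \perp\!\!\!\perp S \mid \mathbf{X}^{P}, A$ and $0 < \Pr(S=1 \mid \mathbf{X}^{P}, A) < 1$ for all $\mathbf{X}^{P}\in\mathcal{X}^{P}$; (Area ignorability) $Y \perp\!\!\!\perp A \mid \mathbf{X}^{P}, \mathbf{X}^{S}, S=1$ and $0 < \Pr(A=j \mid \mathbf{X}^{P}, \mathbf{X}^{S}, S=1) < 1$ for all $(\mathbf{X}^{P},\mathbf{X}^{S})\in\mathcal{X}^{P}\times\mathcal{X}^{S}$. Let $\pi_j(\mathbf{X}) = \Pr(S=1 \mid \mathbf{X}^{P}, A=j)$ and $p_j(\mathbf{X}) = \Pr(A=j \mid \mathbf{X}^{P}, \mathbf{X}^{S}, S=1)$. Then $\tau_j = \mathbb{E}[Y\mid A=j]$ satisfies $$\tau_j = \mathbb{E}\left\{ \frac{\mathbf{1}\{S=1, A=j\}}{\Pr(A=j)} \frac{Y}{\pi_j(\mathbf{X})}\, p_j(\mathbf{X}) \right\} + \mathbb{E}\left\{ \frac{\mathbf{1}\{S=1,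 A\neq j\}}{\Pr(A=j)} \frac{\Pr(A=j \mid \mathbf{X}^{P}, \mathbf{X}^{S}, S=1)}{\Pr(A\neq j \mid \mathbf{X}^{P}, \mathbf{X}^{S}, S=1)} \frac{Y}{\pi_j(\mathbf{X})} \,(1-p_j(\mathbf{X})) \right\}.$$
   Context: Notation: $\perp\!\!\!\perp$ denotes conditional independence; $\mathbf{1}\{\cdot\}$ is the indicator function; $\mathbf{X}$ is shorthand for the covariates $(\mathbf{X}^{P},\mathbf{X}^{S})$. The estimand for area $j$ is $\tau_j = \mathbb{E}[Y\mid A=j]$. *)

(* Defs.v *)
From HB Require Import structures.
From mathcomp Require Import all_boot all_order all_algebra.
From mathcomp Require Import all_classical all_reals all_analysis.
Set Implicit Arguments. Unset Strict Implicit. Unset Printing Implicit Defensive.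
Import Order.TTheory GRing.Theory Num.Theory.
Local Open Scope classical_set_scope.
Local Open Scope ring_scope.

(* [cond_prob_version P E W F g] : g is a (version of the) conditional
   probability Pr(F | W, E), i.e. of Pr(F | W) computed within the event E:
   g is measurable, g(W) is integrable on E, and for every measurable B,
   P(E /\ F /\ W in B) = E[ 1{E, W in B} g(W) ]. *)
Definition cond_prob_version {d dT : measure_display} {R : realType}
  {Omega : measurableType d} {T : measurableType dT}
  (P : probability Omega R) (E : set Omega) (W : Omega -> T)
  (F : set Omega) (g : T -> R) : Prop :=
  measurable_fun setT g /\
  P.-integrable E (fun w => (g (W w))%:E) /\
  forall B : set T, measurable B ->
    P (E `&` F `&` W @^-1` B) = (\int[P]_(w in E `&` W @^-1` B) (g (W w))%:E)%E.

Definition cond_indep {d dT : measure_display} {R : realType}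
  {Omega : measurableType d} {T : measurableType dT} {U V : Type}
  (P : probability Omega R) (E : set Omega) (W : Omega -> T)
  (Y : Omega -> U) (Z : Omega -> V) : Prop :=
  forall (C : set U) (D : set V),
    measurable (Y @^-1` C) -> measurable (Z @^-1` D) ->
    forall f g h : T -> R,
      cond_prob_version P E W (Y @^-1` C) f ->
      cond_prob_version P E W (Z @^-1` D) g ->
      cond_prob_version P E W (Y @^-1` C `&` Z @^-1` D) h ->
      {ae P, forall w, E w -> h (W w) = f (W w) * g (W w)}.

(* Main.v *)
Require Import Defs.
From HB Require Import structures.
From mathcomp Require Import all_boot all_order all_algebra.
From mathcomp Require Import all_classical all_reals all_analysis.
From mathcomp Require Import measurable_realfun.
From mathcomp Require Import ring.
Import Order.TTheory GRing.Theory Num.Theory.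
Import HBNNSimple.
Local Open Scope classical_set_scope.
Local Open Scope ring_scope.

Section helpers.
Context d (Omega : measurableType d) (R : realType) (mu : {measure set Omega -> \bar R}).
Local Open Scope ereal_scope.

Lemma int_simple_comp dT (T : measurableType dT) (V : Omega -> T)
  (mV : measurable_fun setT V)
  (D : set Omega) (mD : measurable D) (rho : Omega -> \bar R)
  (mrho : measurable_fun setT rho)
  (rho0 : forall x, 0 <= rho x) (h : {nnsfun T >-> R}) :
  \int[mu]_(x in D) ((h (V x))%:E * rho x) =
  (\sum_(y \in range h) (y%:E * \int[mu]_(x in D `&` V @^-1` (h @^-1` [set y])) rho x)%E)%R.
Proof.
have mhy y : measurable (h @^-1` [set y]) by exact: measurable_funPTI.
have mVhy y : measurable (V @^-1` (h @^-1` [set y])).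
  by rewrite -[_ @^-1` _]setTI; apply: mV.
under eq_integral => x _.
  rewrite (fimfunE h (V x)) -fsumEFin; last exact: fimfunP.
  rewrite ge0_mule_fsuml; last by move=> y; exact: nnfun_muleindic_ge0.
  over.
rewrite ge0_integral_fsum //; first last.
- by move=> y x _; rewrite mule_ge0 // EFinM nnfun_muleindic_ge0.
- move=> y; apply: emeasurable_funM; last exact: measurable_funTS.
  apply/measurable_EFinP; apply: measurable_funM => //.
  apply: measurableT_comp; [exact: measurable_indic | exact: measurable_funTS].
apply: eq_fsbigr => y /[!inE] -[t _ <-].
under eq_integral do rewrite EFinM -muleA.
rewrite ge0_integralZl //; first last.
- by rewrite lee_fin.
- by move=> x _; rewrite mule_ge0 // lee_fin.
- apply: emeasurable_funM; last exact: measurable_funTS.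
  apply/measurable_EFinP.
  apply: measurableT_comp; [exact: measurable_indic | exact: measurable_funTS].
congr (_ * _).
rewrite integral_mkcondr; apply: eq_integral => x _.
rewrite patchE indicE.
rewrite [X in if X then _ else _](_ : _ = (V x \in h @^-1` [set h t])) //.
by case: (V x \in _) => /=; rewrite ?mul1e ?mul0e.
Qed.


Lemma int_lim dT (T : measurableType dT) (V : Omega -> T)
  (mV : measurable_fun setT V)
  (D : set Omega) (mD : measurable D) (rho : Omega -> R)
  (mrho : measurable_fun setT rho)
  (rho0 : forall x, (0 <= rho x)%R) (phi : T -> \bar R)
  (mphi : measurable_fun setT phi) (phi0 : forall t, 0 <= phi t) :
  \int[mu]_(x in D) (phi (V x) * (rho x)%:E) =
  limn (fun n => \int[mu]_(x in D)
     ((nnsfun_approx measurableT mphi n (V x))%:E * (rho x)%:E)).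
Proof.
rewrite -monotone_convergence //; first last.
- move=> x _ a b ab; rewrite lee_wpmul2r ?lee_fin //.
  exact/lefP/nd_nnsfun_approx.
- by move=> n x _; rewrite mule_ge0 // lee_fin.
- move=> n; apply: emeasurable_funM; last exact/measurable_EFinP/measurable_funTS.
  apply/measurable_EFinP.
  apply: measurableT_comp; last exact: measurable_funTS.
  exact: measurable_funP.
apply: eq_integral => x _; apply/esym/cvg_lim => //.
apply: cvgeZr => //.
exact: (@cvg_nnsfun_approx _ _ _ _ measurableT _ mphi (fun t _ => phi0 t) (V x)).
Qed.


Lemma push_eq dT (T : measurableType dT) (V : Omega -> T)
  (mV : measurable_fun setT V)
  (D1 D2 : set Omega) (mD1 : measurable D1) (mD2 : measurable D2)
  (rho1 rho2 : Omega -> R) (mrho1 : measurable_fun setT rho1)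
  (mrho2 : measurable_fun setT rho2)
  (rho10 : forall x, (0 <= rho1 x)%R) (rho20 : forall x, (0 <= rho2 x)%R) :
  (forall B, measurable B ->
    \int[mu]_(x in D1 `&` V @^-1` B) (rho1 x)%:E =
    \int[mu]_(x in D2 `&` V @^-1` B) (rho2 x)%:E) ->
  forall phi : T -> \bar R, measurable_fun setT phi -> (forall t, 0 <= phi t) ->
  \int[mu]_(x in D1) (phi (V x) * (rho1 x)%:E) =
  \int[mu]_(x in D2) (phi (V x) * (rho2 x)%:E).
Proof.
move=> H phi mphi phi0.
rewrite (@int_lim _ _ V mV _ mD1 _ mrho1 rho10 _ mphi phi0) (@int_lim _ _ V mV _ mD2 _ mrho2 rho20 _ mphi phi0).
congr (limn _); apply/funext => n.
rewrite (@int_simple_comp _ _ V mV _ mD1 (fun x => (rho1 x)%:E)); first last.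
- by move=> x; rewrite lee_fin.
- exact/measurable_EFinP.
rewrite (@int_simple_comp _ _ V mV _ mD2 (fun x => (rho2 x)%:E)); first last.
- by move=> x; rewrite lee_fin.
- exact/measurable_EFinP.
apply: eq_fsbigr => y _; rewrite H //.
Qed.

End helpers.

Definition pm d (Omega : measurableType d) (R : realType)
  (mu : set Omega -> \bar R) dT (T : measurableType dT) (W : Omega -> T)
  (D : set Omega) (B : set T) : \bar R := mu (D `&` W @^-1` B).
Arguments pm {d Omega R} mu {dT T} W D B.

Section pm_facts.
Context d (Omega : measurableType d) (R : realType) (mu : {measure set Omega -> \bar R})
  dT (T : measurableType dT) (W : Omega -> T) (mW : measurable_fun setT W)
  (D : set Omega) (mD : measurable D).
Local Open Scope ereal_scope.

Lemma mDW B : measurable B -> measurable (D `&` W @^-1` B).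
Proof. by move=> mB; apply: measurableI => //; rewrite -[_ @^-1` _]setTI; apply: mW. Qed.

Lemma pm0 : pm mu W D set0 = 0.
Proof. by rewrite /pm preimage_set0 setI0 measure0. Qed.

Lemma pm_ge0 B : 0 <= pm mu W D B.
Proof. exact: measure_ge0. Qed.

Lemma pm_sa : semi_sigma_additive (pm mu W D).
Proof.
move=> F mF tF mUF; rewrite /pm preimage_bigcup setI_bigcupr.
apply: measure_semi_sigma_additive.
- by move=> n; apply: mDW.
- apply/trivIsetP => /= i j _ _ ij; rewrite setIACA -preimage_setI.
  by move/trivIsetP : tF => /(_ _ _ _ _ ij) -> //; rewrite preimage_set0 setI0.
- by rewrite -setI_bigcupr -preimage_bigcup; apply: mDW.
Qed.

End pm_facts.

Arguments int_simple_comp {d Omega R} mu {dT T V} mV {D} mD rho mrho rho0 h.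
Arguments int_lim {d Omega R} mu {dT T V} mV {D} mD {rho} mrho rho0 {phi} mphi phi0.
Arguments push_eq {d Omega R} mu {dT T V} mV {D1 D2} mD1 mD2 {rho1 rho2} mrho1 mrho2 rho10 rho20 _ {phi} mphi phi0.

Section vers.
Context d (Omega : measurableType d) (R : realType) (P : probability Omega R)
  dT (T : measurableType dT) (W : Omega -> T) (mW : measurable_fun setT W)
  (E G : set Omega) (mE : measurable E) (mG : measurable G).
Local Open Scope ereal_scope.
Let mEG : measurable (E `&` G) := measurableI _ _ mE mG.
Definition pmE := pm P W E.
Definition pmEG := pm P W (E `&` G).
HB.instance Definition _ := isMeasure.Build _ _ _ pmE
  (@pm0 _ _ _ P _ _ W E) (@pm_ge0 _ _ _ P _ _ W E) (@pm_sa _ _ _ P _ _ W mW E mE).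
HB.instance Definition _ := isMeasure.Build _ _ _ pmEG
  (@pm0 _ _ _ P _ _ W (E `&` G)) (@pm_ge0 _ _ _ P _ _ W (E `&` G)) (@pm_sa _ _ _ P _ _ W mW (E `&` G) mEG).
Let fin_pmE : fin_num_fun pmE.
Proof. by move=> B mB; rewrite /pmE /pm fin_num_measure //; exact: (@mDW _ _ _ _ W mW E mE). Qed.
Let fin_pmEG : fin_num_fun pmEG.
Proof. by move=> B mB; rewrite /pmEG /pm fin_num_measure //; exact: (@mDW _ _ _ _ W mW _ mEG). Qed.
HB.instance Definition _ := Measure_isFinite.Build _ _ _ pmE fin_pmE.
HB.instance Definition _ := Measure_isFinite.Build _ _ _ pmEG fin_pmEG.

Lemma pmE_integral (phi : T -> \bar R) (mphi : measurable_fun setT phi)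
  (phi0 : forall t, 0 <= phi t) B (mB : measurable B) :
  \int[pmE]_(t in B) phi t = \int[P]_(x in E `&` W @^-1` B) phi (W x).
Proof.
have mEB := @mDW _ _ _ _ W mW E mE B mB.
have m1 : measurable_fun (@setT T) (fun=> 1%R : R) by exact: measurable_cst.
have m1' : measurable_fun (@setT Omega) (fun=> 1%R : R) by exact: measurable_cst.
transitivity (\int[pmE]_(t in B) (phi (id t) * (1%R)%:E)).
  by apply: eq_integral => t _; rewrite mule1.
transitivity (\int[P]_(x in E `&` W @^-1` B) (phi (W x) * (1%R)%:E)); last first.
  by apply: eq_integral => t _; rewrite mule1.
rewrite (int_lim pmE (@measurable_id _ _ setT) mB m1 (fun=> ler01) mphi phi0).
rewrite (int_lim P mW mEB m1' (fun=> ler01) mphi phi0).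
congr (limn _); apply/funext => n.
rewrite (int_simple_comp pmE (@measurable_id _ _ setT) mB); first last.
- by move=> x; rewrite lee_fin.
- exact/measurable_EFinP.
rewrite (int_simple_comp P mW mEB); first last.
- by move=> x; rewrite lee_fin.
- exact/measurable_EFinP.
apply: eq_fsbigr => y _; congr (_ * _).
rewrite (integral_cst pmE) ?(integral_cst P).
- by congr (_ * _); rewrite -setIA -preimage_setI.
- apply: measurableI => //; rewrite -[W @^-1` (_ @^-1` _)]setTI.
  by apply: mW => //; exact: measurable_funPTI.
- by apply: measurableI => //; exact: measurable_funPTI.
Qed.

Lemma version_exists :
  exists g : T -> R, (forall t, (0 <= g t)%R) /\ cond_prob_version P E W G g.
Proof.
have numu : pmEG `<< pmE.
  apply/null_content_dominatesP => A mA pmEA0.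
  apply/eqP; rewrite eq_le measure_ge0 andbT -pmEA0.
  rewrite /= /pmEG /pmE /pm le_measure // ?inE.
  - exact: (@mDW _ _ _ _ W mW _ mEG).
  - exact: (@mDW _ _ _ _ W mW _ mE).
  - by apply: setSI; exact: subIsetl.
pose f := Radon_Nikodym_SigmaFinite.f pmEG pmE.
have ff := Radon_Nikodym_SigmaFinite.f_fin_num numu.
have f0 := Radon_Nikodym_SigmaFinite.f_ge0 numu.
have fint := Radon_Nikodym_SigmaFinite.f_integrable numu.
have fI := Radon_Nikodym_SigmaFinite.f_integral numu.
have fE t : (fine (f t))%:E = f t by rewrite fineK.
have mf : measurable_fun setT f := measurable_int _ fint.
have mff : measurable_fun setT (fun t => fine (f t)).
  by apply: measurableT_comp => //; exact: fine_measurable.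
have key B : measurable B ->
    \int[P]_(x in E `&` W @^-1` B) (fine (f (W x)))%:E = pmEG B.
  move=> mB; rewrite (fI _ mB) pmE_integral //.
  by apply: eq_integral => x _; rewrite fE.
exists (fun t => fine (f t)); split; first by move=> t; rewrite fine_ge0.
split; [exact: mff | split].
- apply/integrableP; split.
    by apply/measurable_EFinP; exact: (measurableT_comp mff (measurable_funTS mW)).
  rewrite (_ : E = E `&` W @^-1` setT); last by rewrite preimage_setT setIT.
  under eq_integral => x _ do rewrite gee0_abs ?lee_fin ?fine_ge0 //.
  by rewrite key // ltey_eq fin_pmEG.
- by move=> B mB; rewrite key.
Qed.

End vers.

Section condlemmas.
Context d (Omega : measurableType d) (R : realType) (P : probability Omega R)
  dT (T : measurableType dT) (W : Omega -> T) (mW : measurable_fun setT W).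
Local Open Scope ereal_scope.

Lemma version_int (E G : set Omega) (mE : measurable E) (mG : measurable G)
  (g : T -> R) (g0 : forall t, (0 <= g t)%R) (hg : cond_prob_version P E W G g)
  (phi : T -> \bar R) (mphi : measurable_fun setT phi) (phi0 : forall t, 0 <= phi t) :
  \int[P]_(x in E `&` G) phi (W x) = \int[P]_(x in E) (phi (W x) * (g (W x))%:E).
Proof.
have [mg [ig hgB]] := hg.
have mEG : measurable (E `&` G) by exact: measurableI.
transitivity (\int[P]_(x in E `&` G) (phi (W x) * (1%R)%:E)).
  by apply: eq_integral => x _; rewrite mule1.
apply: (push_eq P mW mEG mE (measurable_cst _) (measurableT_comp mg mW)
  (fun=> ler01) (fun x => g0 (W x))) => // B mB.
rewrite (eq_integral (cst 1)) // integral_cst; last exact: (@mDW _ _ _ _ W mW _ mEG).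
by rewrite mul1e; exact: hgB.
Qed.

Lemma cond_lemma (E F : set Omega) (mE : measurable E) (mF : measurable F)
  (Y : Omega -> R) (mY : measurable_fun setT Y)
  (g : T -> R) (g0 : forall t, (0 <= g t)%R) (hg : cond_prob_version P E W F g)
  (HI : forall C, measurable C -> forall f h : T -> R,
     cond_prob_version P E W (Y @^-1` C) f ->
     cond_prob_version P E W (Y @^-1` C `&` F) h ->
     {ae P, forall w, E w -> h (W w) = (f (W w) * g (W w))%R})
  (u : R -> \bar R) (mu : measurable_fun setT u) (u0 : forall r, 0 <= u r)
  (phi : T -> R) (mphi : measurable_fun setT phi) (phi0 : forall t, (0 <= phi t)%R) :
  \int[P]_(x in E `&` F) (u (Y x) * (phi (W x))%:E) =
  \int[P]_(x in E) (u (Y x) * (phi (W x) * g (W x))%:E).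
Proof.
have [mg _] := hg.
have mEF : measurable (E `&` F) by exact: measurableI.
apply: (push_eq P mY mEF mE (measurableT_comp mphi mW)
   (measurable_funM (measurableT_comp mphi mW) (measurableT_comp mg mW))
   (fun x => phi0 (W x)) (fun x => mulr_ge0 (phi0 (W x)) (g0 (W x)))) => // C mC.
have mYC : measurable (Y @^-1` C) by rewrite -[_ @^-1` _]setTI; apply: mY.
have mYCF : measurable (Y @^-1` C `&` F) by exact: measurableI.
have [f [f0 hf]] := @version_exists _ _ _ P _ _ W mW E _ mE mYC.
have [h [h0 hh]] := @version_exists _ _ _ P _ _ W mW E _ mE mYCF.
have mf := hf.1; have mh := hh.1.
have mphiE : measurable_fun setT (fun t => (phi t)%:E) by exact/measurable_EFinP.
rewrite (_ : E `&` F `&` Y @^-1` C = E `&` (Y @^-1` C `&` F)); last first.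
  by rewrite -setIA (setIC F).
transitivity (\int[P]_(x in E `&` (Y @^-1` C `&` F)) (phi (W x))%:E) => //.
rewrite (@version_int E _ mE mYCF h h0 hh (fun t => (phi t)%:E) mphiE); last by move=> t; rewrite lee_fin.
transitivity (\int[P]_(x in E) ((phi (W x))%:E * (f (W x) * g (W x))%:E)).
  apply: ae_eq_integral => //.
  - apply: emeasurable_funM; apply/measurable_EFinP; apply: measurable_funTS.
      exact: measurableT_comp mphi mW.
    exact: measurableT_comp mh mW.
  - apply: emeasurable_funM; apply/measurable_EFinP; apply: measurable_funTS.
      exact: measurableT_comp mphi mW.
    apply: measurable_funM; exact: measurableT_comp.
  - have := HI C mC f h hf hh.
    apply: filterS => x Hx Ex; rewrite Hx //.
have mphig : measurable_fun setT (fun t => (phi t * g t)%:E).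
  by apply/measurable_EFinP; exact: measurable_funM.
rewrite (_ : E `&` Y @^-1` C = E `&` Y @^-1` C) //.
rewrite (@version_int E _ mE mYC f f0 hf (fun t => (phi t * g t)%:E) mphig);
  last by move=> t; rewrite lee_fin mulr_ge0.
by apply: eq_integral => x _; rewrite -!EFinM /= (mulrC (f (W x))) mulrA.
Qed.

End condlemmas.

Theorem corollary1 {d dP dS : measure_display} (R : realType)
  (Omega : measurableType d) (P : probability Omega R)
  (TP : measurableType dP) (TS : measurableType dS) (J : nat)
  (Y : Omega -> R) (S : Omega -> bool) (A : Omega -> nat)
  (XP : Omega -> TP) (XS : Omega -> TS)
  (pi : nat -> TP -> R) (p : TP * TS -> R) (j : nat) :
  (* random variables *)
  measurable_fun setT Y ->
  P.-integrable setT (fun w => (Y w)%:E) ->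
  measurable (S @^-1` [set true]) ->
  (forall a, measurable (A @^-1` [set a])) ->
  (forall w, (1 <= A w <= J)%N) ->
  measurable_fun setT XP ->
  measurable_fun setT XS ->
  (* the fixed area j *)
  (1 <= j <= J)%N ->
  (0 < P (A @^-1` [set j]))%E ->
  (* sampling ignorability *)
  (forall a, (1 <= a <= J)%N ->
     cond_indep P (A @^-1` [set a]) XP Y S) ->
  (forall a, (1 <= a <= J)%N ->
     cond_prob_version P (A @^-1` [set a]) XP (S @^-1` [set true]) (pi a)) ->
  (forall a x, (1 <= a <= J)%N -> 0 < pi a x < 1) ->
  (* area ignorability *)
  cond_indep P (S @^-1` [set true]) (fun w => (XP w, XS w)) Y A ->
  cond_prob_version P (S @^-1` [set true]) (fun w => (XP w, XS w))
    (A @^-1` [set j]) p ->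
  (forall x, 0 < p x < 1) ->
  let pAj := fine (P (A @^-1` [set j])) in
  let piX := fun w => pi j (XP w) in
  let pX := fun w => p (XP w, XS w) in
  ((\int[P]_(w in A @^-1` [set j]) (Y w)%:E) * (pAj^-1)%:E =
   (\int[P]_w ((S w && (A w == j))%:R / pAj * (Y w / piX w) * pX w)%:E) +
   (\int[P]_w ((S w && (A w != j))%:R / pAj * (pX w / (1 - pX w))
                 * (Y w / piX w) * (1 - pX w))%:E))%E.

Proof.
move=> mY iY mS mA hA mXP mXS hj pAj0 Hsamp Hpi pi_bd Harea Hp p_bd pAj piX pX.
set ES := S @^-1` [set true].
set Ej := A @^-1` [set j].
have mEj : measurable Ej := mA j.
pose W2 := fun w => (XP w, XS w).
have mW2 : measurable_fun setT W2 := measurable_fun_pair mXP mXS.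
have mpi := (Hpi j hj).1.
have mp := Hp.1.
have pi_pos t : 0 < pi j t by case/andP: (pi_bd j t hj).
have pi0 t : 0 <= pi j t by exact/ltW.
have p_pos t : 0 < p t by case/andP: (p_bd t).
have p0 t : 0 <= p t by exact/ltW.
pose phi := fun t => (pi j t)^-1.
have mphi : measurable_fun setT phi.
  have -> : phi = fun t => expR (- ln (pi j t)).
    by apply/funext => t; rewrite expRN lnK // posrE.
  apply: measurableT_comp; first exact: measurable_expR.
  apply: measurableT_comp; first exact: oppr_measurable.
  by apply: measurableT_comp; first exact: measurable_ln.
have phi0 t : 0 <= phi t by rewrite invr_ge0.
have mYC C : measurable C -> measurable (Y @^-1` C).
  by move=> mC; rewrite -[_ @^-1` _]setTI; apply: mY.
pose Q x := phi (XP x) * p (W2 x).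
have Q0 x : 0 <= Q x by rewrite mulr_ge0.
have CORE (u : R -> \bar R) : measurable_fun setT u -> (forall r, (0 <= u r)%E) ->
   (\int[P]_(x in ES) (u (Y x) * (Q x)%:E) =
    \int[P]_(x in Ej) u (Y x))%E.
  move=> mu u0; rewrite /Q.
  have mphi1 : measurable_fun setT (fun t : TP * TS => phi t.1).
    exact: measurableT_comp mphi measurable_fst.
  have H1 := @cond_lemma _ _ _ P _ _ W2 mW2 ES Ej mS mEj Y mY p p0 Hp
    (fun C mC f h hf hh => Harea C [set j] (mYC C mC) mEj f p h hf Hp hh)
    u mu u0 (fun t => phi t.1) mphi1 (fun t => phi0 t.1).
  have H2 := @cond_lemma _ _ _ P _ _ XP mXP Ej ES mEj mS Y mY (pi j) pi0 (Hpi j hj)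
    (fun C mC f h hf hh => Hsamp j hj C [set true] (mYC C mC) mS f (pi j) h hf (Hpi j hj) hh)
    u mu u0 phi mphi phi0.
  rewrite -H1 setIC H2; apply: eq_integral => x _.
  by rewrite /phi mulVf ?mule1 // gt_eqF.
have inES w : (w \in ES) = S w.
  by apply/idP/idP => [/set_mem //|Sw]; apply/mem_set.
have inEj w : (w \in Ej) = (A w == j).
  by apply/idP/idP => [/set_mem /= ->|/eqP Aw]; [|apply/mem_set].
have mQ : measurable_fun setT Q.
  by apply: measurable_funM; [exact: measurableT_comp mphi mXP | exact: measurableT_comp mp mW2].
have mYQ : measurable_fun setT (fun x => Y x * Q x) by exact: measurable_funM.
have mEYQ : measurable_fun setT (fun x => (Y x * Q x)%:E) by exact/measurable_EFinP.
have intYQ : P.-integrable ES (fun x => (Y x * Q x)%:E).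
  apply/integrableP; split; first exact: measurable_funTS.
  under eq_integral => x _ do rewrite abse_EFin normrM (ger0_norm (Q0 x)) EFinM.
  rewrite (CORE (fun r => `|r|%:E)); first last.
  - by move=> r; rewrite lee_fin.
  - by apply/measurable_EFinP; exact: normr_measurable.
  apply: (le_lt_trans _ (integrableP _ _ _ iY).2).
  apply: ge0_subset_integral => //.
  by apply/measurable_EFinP; exact: (measurableT_comp (@normr_measurable _ setT) mY).
have eqYQ : (\int[P]_(x in ES) (Y x * Q x)%:E = \int[P]_(x in Ej) (Y x)%:E)%E.
  rewrite integralE [RHS]integralE; congr (_ - _)%E.
  - transitivity (\int[P]_(x in ES) ((Num.max (Y x) 0)%:E * (Q x)%:E))%E.
      apply: eq_integral => x _; rewrite funeposE -EFin_max -EFinM.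
      by rewrite maxr_pMl // mul0r.
    rewrite (CORE (fun r => (Num.max r 0)%:E)); first last.
    - by move=> r; rewrite lee_fin le_max lexx orbT.
    - apply/measurable_EFinP; apply: measurable_maxr => //; exact: measurable_cst.
    by apply: eq_integral => x _; rewrite funeposE -EFin_max.
  - transitivity (\int[P]_(x in ES) ((Num.max (- Y x) 0)%:E * (Q x)%:E))%E.
      apply: eq_integral => x _; rewrite funenegE -EFin_max -EFinM.
      by rewrite maxr_pMl // mul0r mulNr.
    rewrite (CORE (fun r => (Num.max (- r) 0)%:E)); first last.
    - by move=> r; rewrite lee_fin le_max lexx orbT.
    - apply/measurable_EFinP; apply: measurable_maxr => //.
    by apply: eq_integral => x _; rewrite funenegE -EFin_max.
have pAj_pos : 0 < pAj.
  apply: fine_gt0; rewrite pAj0 /=.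
  exact: (le_lt_trans (probability_le1 P mEj) (ltry 1)).
have pAj_neq0 : pAj != 0 by rewrite gt_eqF.
have indic (D : set Omega) (F : Omega -> R) :
    (\int[P]_x ((\1_D x * F x)%:E) = \int[P]_(x in D) (F x)%:E)%E.
  rewrite [RHS]integral_mkcond; apply: eq_integral => x _.
  by rewrite patchE indicE; case: (x \in D); rewrite ?mul1r ?mul0r.
rewrite [X in (_ = X + _)%E](eq_integral (fun w => (\1_(ES `&` Ej) w * (pAj^-1 * (Y w * Q w)))%:E)); last first.
  move=> w _; congr (_%:E); rewrite indicE in_setI inES inEj /Q /phi /W2 /piX /pX.
  by ring.
rewrite [X in (_ = _ + X)%E](eq_integral (fun w => (\1_(ES `&` ~` Ej) w * (pAj^-1 * (Y w * Q w)))%:E)); last first.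
  move=> w _; congr (_%:E); rewrite indicE in_setI in_setC inES inEj /Q /phi /W2 /piX /pX.
  have h1 : 1 - p (XP w, XS w) != 0.
    by rewrite subr_eq0 eq_sym lt_eqF //; case/andP: (p_bd (XP w, XS w)).
  have h2 : pi j (XP w) != 0 by rewrite gt_eqF.
  by field; rewrite h1 h2 pAj_neq0.
rewrite !indic -integral_setU; first last.
- by apply/disj_set2P; rewrite setIACA setICr setI0.
- apply/measurable_EFinP; apply: measurable_funTS.
  by apply: measurable_funM => //; exact: measurable_cst.
- by apply: measurableI => //; exact: measurableC.
- exact: measurableI.
rewrite -setIUr setUCr setIT.
under eq_integral do rewrite EFinM.
by rewrite integralZl // eqYQ muleC.
Qed.
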